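(* For every $p\in[0,1/2)$, the noisy sorting capacity satisfies $C(p)\le 1-H(p)$.
   Context: Noisy sorting problem. Fix $p\in[0,1/2)$. Let $\theta_1,\ldots,\theta_n$ be distinct real numbers; their ordering is the permutation $\pi$ of $[n]$ with $\theta_{\pi(1)}<\cdots<\theta_{\pi(n)}$. At time step $k$ an agent submits a query $(U_k,V_k)=(\theta_i,\theta_j)$, $i\neq j$, and receives $Y_k=\mathbb{1}_{\{U_k<V_k\}}\oplus Z_k$, with $Z_k$ i.i.d. $\mathrm{Bern}(p)$ independent of everything else. An adaptive querying strategy is a causal (possibly randomized) rule $(U_k,V_k)=f_k(Y^{k-1},U^{k-1},V^{k-1})$ with a stopping time $M$ (number of queries) which may depend on the responses. An $(R,n)$ noisy sorting code consists of such a strategy and an estimator $\hat\Pi=\hat\pi(Y^M,U^M,V^M)$, with $\mathbb{E}[M]=\frac{n\log_2 n}{R}$. A rate $R$ is achievable if there is a sequence (indexed by $n$) of $(R,n)$ noisy sorting codes with $\lim_{n\to\infty}\max_\pi\mathbb{P}\{\hat\Pi\neq\pi\}=0$; $C(p)$ is the supremum of achievable rates. $H(p)=-p\log_2 p-(1-p)\log_2(1-p)$. *)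

(* Defs.v *)
From HB Require Import structures.
From mathcomp Require Import all_boot all_order all_algebra all_fingroup.
From mathcomp Require Import all_classical all_reals all_analysis.
Set Implicit Arguments. Unset Strict Implicit. Unset Printing Implicit Defensive.
Import Order.TTheory GRing.Theory Num.Theory.
Local Open Scope ring_scope.
Local Open Scope classical_set_scope.

Section NoisySorting.
Variable R : realType.

Definition log2 (x : R) : R := ln x / ln 2.

Definition binH (p : R) : R :=
  (if p == 0 then 0 else - p * log2 p) +
  (if 1 - p == 0 then 0 else - (1 - p) * log2 (1 - p)).

Variable n : nat.

(* one round of interaction: the queried pair of indices (i,j) and the
   noisy response Y *)
Definition event := ('I_n * 'I_n * bool)%type.

(* theta_{pi(1)} < ... < theta_{pi(n)}, so theta_i < theta_j iff the rank
   pi^-1 i of i is smaller than the rank of j *)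
Definition lessb (pi : 'S_n) (i j : 'I_n) : bool := (nat_of_ord ((pi^-1)%g i) < nat_of_ord ((pi^-1)%g j))%N.

Definition chan (p : R) (pi : 'S_n) (q : 'I_n * 'I_n) (y : bool) : R :=
  if y == lessb pi q.1 q.2 then 1 - p else p.

(* A (possibly randomized, causal) adaptive querying strategy with stopping
   rule, given as a behavioural strategy: after history h (the queries and
   responses so far), [act h None] is the probability of stopping and
   [act h (Some (i,j))] the probability of querying (theta_i, theta_j).
   [est] is the (deterministic) estimator applied to the full history. *)
Record strategy := Strategy {
  act : seq event -> option ('I_n * 'I_n) -> R;
  est : seq event -> 'S_n }.

Definition valid_strategy (S : strategy) : Prop :=
  forall h : seq event,
    (forall a, 0 <= act S h a) /\
    (\sum_(a : option ('I_n * 'I_n)) act S h a = 1) /\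
    (forall i : 'I_n, act S h (Some (i, i)) = 0).

(* probability that the interaction, started after history [past], produces
   the events [h] next (without stopping in between) *)
Fixpoint reachp (S : strategy) (p : R) (pi : 'S_n) (past h : seq event) : R :=
  match h with
  | [::] => 1
  | e :: t =>
      act S past (Some (e.1)) * chan p pi e.1 e.2 *
      reachp S p pi (rcons past e) t
  end.

Definition stop_prob (S : strategy) (p : R) (pi : 'S_n) (k : nat) : R :=
  \sum_(h : k.-tuple event) reachp S p pi [::] h * act S h None.

Definition err_prob (S : strategy) (p : R) (pi : 'S_n) (k : nat) : R :=
  \sum_(h : k.-tuple event | est S h != pi) reachp S p pi [::] h * act S h None.

Definition prob_stop (S : strategy) (p : R) (pi : 'S_n) : \bar R :=
  \sum_(0 <= k <oo) (stop_prob S p pi k)%:E.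

(* E[M] (over terminating runs; M < oo a.s. is required separately) *)
Definition expected_M (S : strategy) (p : R) (pi : 'S_n) : \bar R :=
  \sum_(0 <= k <oo) (k%:R * stop_prob S p pi k)%:E.

Definition P_error (S : strategy) (p : R) (pi : 'S_n) : \bar R :=
  \sum_(0 <= k <oo) (err_prob S p pi k)%:E.

Definition max_error (S : strategy) (p : R) : \bar R :=
  \big[Order.max/0%E]_(pi : 'S_n) P_error S p pi.

Definition sorting_code (p Rt : R) (S : strategy) : Prop :=
  valid_strategy S /\
  forall pi : 'S_n, prob_stop S p pi = 1%E /\
    expected_M S p pi = (n%:R * log2 n%:R / Rt)%:E.

End NoisySorting.

Definition achievable (R : realType) (p Rt : R) : Prop :=
  exists codes : forall n : nat, strategy R n,
    (forall n, sorting_code p Rt (codes n)) /\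
    ((fun n => max_error (codes n) p) @ \oo --> 0%E).

(* Main.v *)
Require Import Defs.
From HB Require Import structures.
From mathcomp Require Import all_boot all_order all_algebra all_fingroup.
From mathcomp Require Import all_classical all_reals all_analysis.
From mathcomp Require Import lra ring zify.
Import Order.TTheory GRing.Theory Num.Theory.
Local Open Scope ring_scope.

Lemma sum_option (R : nmodType) (T : finType) (F : option T -> R) :
  \sum_(a : option T) F a = F None + \sum_(x : T) F (Some x).
Proof.
rewrite (bigD1 None) //=; congr (_ + _).
rewrite (reindex_omap Some id) /=; last by case.
by apply: eq_bigl => x; rewrite eqxx.
Qed.

Section Gen.
Variable R : realType.



Lemma sum_tupleS (T : finType) k (f : seq T -> R) :
  \sum_(t : k.+1.-tuple T) f t = \sum_(t : k.-tuple T) \sum_(e : T) f (rcons t e).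
Proof.
rewrite pair_big /=.
rewrite (reindex (fun q : k.-tuple T * T => [tuple of rcons q.1 q.2])) //=.
exists (fun t : k.+1.-tuple T =>
   ([tuple of belast (thead t) (behead t)], last (thead t) (behead t))).
- move=> [t e] _ /=.
  have H : rcons t e = thead [tuple of rcons t e] :: behead [tuple of rcons t e].
    exact: (congr1 val (tuple_eta [tuple of rcons t e])).
  have := lastI (thead [tuple of rcons t e]) (behead [tuple of rcons t e]).
  rewrite -H => /rcons_inj [H1 H2].
  congr pair; last exact: (esym H2).
  by apply: val_inj; rewrite /= -H1.
- move=> t _ /=; apply: val_inj => /=.
  by rewrite -lastI; exact: (esym (congr1 val (tuple_eta t))).
Qed.

Lemma xlnx_ge (x y : R) : 0 <= x -> 0 <= y -> (0 < x -> 0 < y) ->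
  x - y <= x * ln (x / y).
Proof.
move=> x0 y0 xy.
have [->|xp] := eqVneq x 0; first by rewrite mul0r sub0r oppr_le0.
have xpos : 0 < x by rewrite lt0r xp.
have ypos := xy xpos.
have H := le_ln1Dx (x := y / x - 1).
have e1 : 1 + (y / x - 1) = y / x by rewrite addrC subrK.
rewrite e1 in H.
have : ln (y / x) <= y / x - 1.
  apply: H. have : 0 < y / x by apply: divr_gt0. lra.
rewrite -[x / y]invf_div lnV ?posrE ?divr_gt0 //.
move=> Hl.
have : x * (y / x - 1) >= x * ln (y / x) by rewrite ler_pM2l.
rewrite mulrBr mulr1 mulrCA divff ?mulr1 //.
rewrite mulrN. lra.
Qed.


Lemma gibbs (I : finType) (a b : I -> R) :
  (forall i, 0 <= a i) -> (forall i, 0 <= b i) -> (forall i, 0 < a i -> 0 < b i) ->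
  \sum_i b i <= \sum_i a i -> 0 <= \sum_i a i * ln (a i / b i).
Proof.
move=> a0 b0 ab sab.
apply: (@le_trans _ _ (\sum_i (a i - b i))).
  by rewrite sumrB subr_ge0.
apply: ler_sum => i _; apply: xlnx_ge; [exact: a0|exact: b0|exact: ab].
Qed.

Lemma term_split (x al ch Sx Sxc N : R) : 0 <= x -> 0 <= al -> 0 <= ch ->
  x <= Sx -> x * ch <= Sxc -> 0 < N ->
  x * al * ch * ln (x * al * ch / (al * Sxc / N)) =
  al * (x * ch * ln (x / (Sx / N))) + al * (x * ch * ln (ch * Sx / Sxc)).
Proof.
move=> x0 a0 c0 xS xcS N0.
have [->|xp] := eqVneq x 0; first by rewrite !mul0r !mulr0 addr0.
have [->|ap] := eqVneq al 0; first by rewrite !mul0r !mulr0 !mul0r addr0.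
have [->|cp] := eqVneq ch 0; first by rewrite !mulr0 !mul0r !mulr0 addr0.
have xpos : 0 < x by rewrite lt0r xp.
have apos : 0 < al by rewrite lt0r ap.
have cpos : 0 < ch by rewrite lt0r cp.
have Spos : 0 < Sx by apply: lt_le_trans xS.
have Scpos : 0 < Sxc by apply: lt_le_trans xcS; rewrite mulr_gt0.
rewrite -mulrDr -mulrDr -lnM ?posrE ?divr_gt0 ?mulr_gt0 //.
have -> : x / (Sx / N) * (ch * Sx / Sxc) = x * al * ch / (al * Sxc / N).
  field. by rewrite !gt_eqF.
by ring.
Qed.


Lemma cln_bound (c : R) : 0 <= c -> c - 1/2 - c * ln 2 <= c * ln c.
Proof.
move=> c0.
have [->|cp] := eqVneq c 0; first by rewrite !mul0r subr0; lra.
have cpos : 0 < c by rewrite lt0r cp.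
have h2 : 0 < 1 / 2 :> R by rewrite divr_gt0.
have := @xlnx_ge c (1/2) c0 (ltW h2) (fun _ => h2).
rewrite ln_div ?posrE //.
rewrite [ln (1/2)]ln_div ?posrE // ?ltr01 ?ltr0n //.
rewrite ln1 sub0r opprK mulrDr => H.
lra.
Qed.

Lemma split_est (T P : finType) (f : T -> P) (F : P -> T -> R) :
  \sum_(pi : P) (\sum_(h : T) F pi h - \sum_(h | f h != pi) F pi h) = \sum_h F (f h) h.
Proof.
have -> : \sum_(pi : P) (\sum_(h : T) F pi h - \sum_(h | f h != pi) F pi h) =
   \sum_(pi : P) \sum_(h : T) (if f h == pi then F pi h else 0).
  apply: eq_bigr => pi _.
  rewrite (bigID (fun h => f h != pi)) /= addrAC subrr add0r big_mkcond.
  by apply: eq_bigr => h _; rewrite negbK.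
rewrite exchange_big; apply: eq_bigr => h _.
rewrite -big_mkcond (big_pred1 (f h)) // => pi.
Qed.



Lemma series_approx (u : nat -> R) (x : R) : (forall k, 0 <= u k) ->
  (\sum_(0 <= k <oo) (u k)%:E)%E = x%:E ->
  forall d : R, 0 < d -> exists L, x - d < \sum_(k < L) u k.
Proof.
move=> u0 hx d d0.
have hc : cvgn (fun L => (\sum_(0 <= k < L) (u k)%:E)%E).
  by apply: is_cvg_nneseries => k _ _; rewrite lee_fin.
have hl : ((fun L => (\sum_(0 <= k < L) (u k)%:E)%E) @ \oo --> x%:E)%classic.
  by rewrite -hx; exact: hc.
move/fine_cvgP : hl => [_ hf].
have := @cvgr_dist_lt _ _ _ _ _ _ _ hf d d0.
move=> [N _ HN].
exists N; have := HN N (leqnn N).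
rewrite /= sumEFin /= big_mkord.
move=> H. have := ler_norm (x - \sum_(k < N) u k). lra.
Qed.


Lemma ereal_cvg0_le (f : nat -> \bar R) : (f @ \oo --> 0%E)%classic ->
  forall d : R, 0 < d -> exists N, forall m, (N <= m)%N -> (f m <= d%:E)%E.
Proof.
move=> hf d d0.
have : (f @ \oo --> (0:R)%:E)%classic by exact: hf.
move/fine_cvgP => [[N1 _ H1] hg].
have [N2 _ H2] := @cvgr_dist_lt _ _ _ _ _ _ _ hg d d0.
exists (maxn N1 N2) => m hm.
have f1 : f m \is a fin_num by apply: H1; rewrite /=; lia.
have := H2 m (ltac:(rewrite /=; lia)).
rewrite /= sub0r normrN => H.
rewrite -(fineK f1) lee_fin.
have := ler_norm (fine (f m)); lra.
Qed.


Lemma stirling (m : nat) : m%:R * ln (m%:R : R) - m%:R <= ln ((m`!)%:R : R).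
Proof.
elim: m => [|m IH]; first by rewrite mul0r subr0 fact0 ln1.
rewrite factS natrM lnM ?posrE ?ltr0n ?fact_gt0 //.
have [->|m0] := eqVneq m 0%N.
  by rewrite fact0 ln1 addr0 mul1r; lra.
have mpos : 0 < (m%:R : R) by rewrite ltr0n lt0n.
have key : m%:R * (ln (m.+1%:R : R) - ln (m%:R)) <= 1.
  rewrite -ln_div ?posrE ?ltr0n ?lt0n //.
  have -> : (m.+1%:R / m%:R : R) = 1 + 1 / m%:R.
    by rewrite -natr1 mulrDl divff ?gt_eqF // addrC.
  have hm0 : 0 < 1 / (m%:R : R) by rewrite divr_gt0.
  have hm : -1 < 1 / (m%:R : R) by move: hm0; lra.
  have := @le_ln1Dx R (1 / m%:R) hm.
  move=> H; have := ler_wpM2l (ltW mpos) H.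
  by rewrite mulrCA divff ?gt_eqF ?ltr0n ?lt0n // mulr1.
move: key; rewrite mulrBr -natr1 => key.
rewrite mulrDl mul1r.
lra.
Qed.


Lemma eqle (x y : R) : x = y -> x <= y. Proof. by move->. Qed.

End Gen.

Section Main.
Variables (R : realType) (n : nat) (S : strategy R n) (p : R).
Hypotheses (HS : valid_strategy S) (hp0 : 0 <= p) (hp1 : p < 1).

Lemma act_ge0 h a : 0 <= Defs.act S h a.
Proof. by case: (HS h) => H _; apply: H. Qed.

Lemma chan_ge0 (pi : 'S_n) q y : 0 <= chan p pi q y.
Proof. rewrite /chan; case: ifP => _ //. by rewrite subr_ge0 ltW. Qed.

Lemma chan_sum (pi : 'S_n) q : \sum_(y : bool) chan p pi q y = 1.
Proof. rewrite big_bool /chan; case: (lessb pi q.1 q.2) => /=; lra. Qed.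

Lemma reach_ge0 pi past h : 0 <= reachp S p pi past h.
Proof.
elim: h past => [|e t IH] past /=; first lra.
by rewrite !mulr_ge0 ?act_ge0 ?chan_ge0 ?IH.
Qed.

Lemma reach_rcons pi past h e :
  reachp S p pi past (rcons h e) =
  reachp S p pi past h * Defs.act S (past ++ h) (Some e.1) * chan p pi e.1 e.2.
Proof.
elim: h past => [|x t IH] past /=; first by rewrite cats0 !mulr1 mul1r.
by rewrite IH cat_rcons !mulrA.
Qed.

Definition w pi h := reachp S p pi [::] h.

Lemma w_ge0 pi h : 0 <= w pi h. Proof. exact: reach_ge0. Qed.

Lemma w_rcons pi h e : w pi (rcons h e) = w pi h * Defs.act S h (Some e.1) * chan p pi e.1 e.2.
Proof. by rewrite /w reach_rcons. Qed.

Lemma sum_act h : \sum_(q : 'I_n * 'I_n) Defs.act S h (Some q) = 1 - Defs.act S h None.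
Proof.
case: (HS h) => _ [H _]; rewrite sum_option in H; lra.
Qed.

Lemma sum_act_chan pi h :
  \sum_(e : event n) Defs.act S h (Some e.1) * chan p pi e.1 e.2 = 1 - Defs.act S h None.
Proof.
transitivity (\sum_(q : 'I_n * 'I_n) \sum_(y : bool) Defs.act S h (Some q) * chan p pi q y).
  by rewrite pair_big.
rewrite -sum_act; apply: eq_bigr => q _.
by rewrite -mulr_sumr chan_sum mulr1.
Qed.


Lemma sum_event (F : event n -> R) :
  \sum_(e : event n) F e = \sum_(q : 'I_n * 'I_n) \sum_(y : bool) F (q, y).
Proof. by rewrite pair_big; apply: eq_bigr => -[q y]. Qed.

Definition NN : R := (n`!)%:R.
Lemma NN_gt0 : 0 < NN. Proof. by rewrite /NN ltr0n fact_gt0. Qed.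

Definition Sw h := \sum_(pi : 'S_n) w pi h.
Definition info h := \sum_(pi : 'S_n) w pi h * ln (w pi h / (Sw h / NN)).
Definition Hn : R := - (p * ln p + (1 - p) * ln (1 - p)).

Lemma w_le_Sw pi h : w pi h <= Sw h.
Proof.
rewrite /Sw (bigD1 pi) //= lerDl; apply: sumr_ge0 => i _; exact: w_ge0.
Qed.

Lemma Sw_ge0 h : 0 <= Sw h.
Proof. apply: sumr_ge0 => i _; exact: w_ge0. Qed.

Lemma sum_const_Sn (c : R) : \sum_(pi : 'S_n) c = c * NN.
Proof. by rewrite sumr_const card_Sn mulr_natr. Qed.

Lemma info_ge0 h : 0 <= info h.
Proof.
apply: gibbs => [pi|pi|pi|].
- exact: w_ge0.
- by rewrite divr_ge0 ?Sw_ge0 // ltW // NN_gt0.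
- move=> wp; rewrite divr_gt0 ?NN_gt0 //; exact: lt_le_trans wp (w_le_Sw pi h).
- rewrite sum_const_Sn divfK ?gt_eqF ?NN_gt0 //.
Qed.

Lemma sum_chan_ln (pi : 'S_n) q :
  \sum_(y : bool) chan p pi q y * ln (chan p pi q y) = - Hn.
Proof.
rewrite big_bool /chan /Hn opprK.
by case: (lessb pi q.1 q.2) => /=; rewrite addrC.
Qed.


Lemma mi_bound (x : 'S_n -> R) q : (forall pi, 0 <= x pi) ->
  \sum_(y : bool) \sum_(pi : 'S_n) x pi * chan p pi q y *
      ln (chan p pi q y * (\sum_s x s) / (\sum_s x s * chan p s q y))
  <= (ln 2 - Hn) * \sum_s x s.
Proof.
move=> x0.
set Sx := \sum_s x s.
have Sx0 : 0 <= Sx by apply: sumr_ge0.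
have [Sxz|Sxp] : Sx = 0 \/ 0 < Sx.
  by move: Sx0; rewrite le_eqVlt => /orP [/eqP <-|->]; [left|right].
  have xz := psumr_eq0P (fun i _ => x0 i) Sxz.
  rewrite Sxz mulr0 big1 // => y _; rewrite big1 // => pi _.
  by rewrite xz // !mul0r.
set c := fun y : bool => (\sum_s x s * chan p s q y) / Sx.
have Sxc_ge pi y : x pi * chan p pi q y <= \sum_s x s * chan p s q y.
  rewrite (bigD1 pi) //= lerDl; apply: sumr_ge0 => i _.
  by rewrite mulr_ge0 ?x0 ?chan_ge0.
have termE y pi : x pi * chan p pi q y *
      ln (chan p pi q y * Sx / (\sum_s x s * chan p s q y)) =
    x pi * (chan p pi q y * ln (chan p pi q y)) - x pi * chan p pi q y * ln (c y).
  have [->|xp] := eqVneq (x pi) 0; first by rewrite !mul0r subrr.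
  have [->|cp] := eqVneq (chan p pi q y) 0; first by rewrite !(mulr0, mul0r, subr0).
  have xpos : 0 < x pi by rewrite lt0r xp x0.
  have cpos : 0 < chan p pi q y by rewrite lt0r cp chan_ge0.
  have Sxcp : 0 < \sum_s x s * chan p s q y.
    by apply: lt_le_trans (Sxc_ge pi y); rewrite mulr_gt0.
  have -> : chan p pi q y * Sx / (\sum_s x s * chan p s q y) = chan p pi q y / c y.
    by rewrite /c invf_div mulrA.
  rewrite ln_div ?posrE ?divr_gt0 //.
  by rewrite mulrBr mulrA.
under eq_bigr do under eq_bigr do rewrite termE.
under eq_bigr do rewrite sumrB.
rewrite sumrB exchange_big /=.
under eq_bigr do rewrite -mulr_sumr sum_chan_ln.
have cE y : \sum_i x i * chan p i q y = Sx * c y.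
  by rewrite /c mulrC divfK // gt_eqF.
rewrite -mulr_suml -/Sx.
under [X in _ - X <= _]eq_bigr => y _ do rewrite -mulr_suml cE.
have csum : c true + c false = 1.
  have cs s : chan p s q true + chan p s q false = 1.
    by have := chan_sum s q; rewrite big_bool.
  rewrite /c -mulrDl -big_split /=.
  under eq_bigr do rewrite -mulrDr cs mulr1.
  by rewrite divff // gt_eqF.
have c0 y : 0 <= c y.
  rewrite /c divr_ge0 //; apply: sumr_ge0 => i _; by rewrite mulr_ge0 ?x0 ?chan_ge0.
have ht := @cln_bound R _ (c0 true).
have hf := @cln_bound R _ (c0 false).
rewrite big_bool /=.
have -> : Sx * c true * ln (c true) + Sx * c false * ln (c false) =
   Sx * (c true * ln (c true) + c false * ln (c false)) by rewrite -!mulrA -mulrDr.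
have : - ln 2 <= c true * ln (c true) + c false * ln (c false).
  have -> : - ln 2 = (c true + c false) - 1 - (c true + c false) * ln 2.
    by rewrite csum mul1r subrr sub0r.
  by rewrite mulrDl; lra.
move=> hb.
have : Sx * - ln 2 <= Sx * (c true * ln (c true) + c false * ln (c false)).
  by rewrite ler_pM2l.
rewrite mulrBl !mulrN [ln 2 * Sx]mulrC [Hn * Sx]mulrC.
rewrite /Hn !mulrN !opprK. lra.
Qed.


Lemma info_step h :
  \sum_(e : event n) info (rcons h e) <=
  (1 - Defs.act S h None) * info h + (ln 2 - Hn) * ((1 - Defs.act S h None) * Sw h).
Proof.
rewrite sum_event.
set C := ln 2 - Hn.
have Swe q y : Sw (rcons h (q, y)) =
    Defs.act S h (Some q) * \sum_s w s h * chan p s q y.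
  rewrite /Sw mulr_sumr; apply: eq_bigr => s _; rewrite w_rcons /=; ring.
have Sxc_ge pi q y : w pi h * chan p pi q y <= \sum_s w s h * chan p s q y.
  rewrite (bigD1 pi) //= lerDl; apply: sumr_ge0 => i _.
  by rewrite mulr_ge0 ?w_ge0 ?chan_ge0.
set A := fun q y => \sum_pi w pi h * chan p pi q y * ln (w pi h / (Sw h / NN)).
set B := fun q y => \sum_pi w pi h * chan p pi q y *
      ln (chan p pi q y * Sw h / \sum_s w s h * chan p s q y).
have infoE q y : info (rcons h (q, y)) =
    Defs.act S h (Some q) * A q y + Defs.act S h (Some q) * B q y.
  rewrite /info /A /B !mulr_sumr -big_split /=; apply: eq_bigr => pi _.
  rewrite w_rcons Swe /=.
  apply: term_split; rewrite ?w_ge0 ?act_ge0 ?chan_ge0 ?w_le_Sw ?Sxc_ge ?NN_gt0 //.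
under eq_bigr do under eq_bigr do rewrite infoE.
under eq_bigr do rewrite big_split /= -!mulr_sumr.
rewrite big_split /=.
have HA q : \sum_y A q y = info h.
  rewrite /A exchange_big /=; apply: eq_bigr => pi _.
  under eq_bigr do rewrite mulrAC.
  by rewrite -mulr_sumr chan_sum mulr1.
have HB q : \sum_y B q y <= C * Sw h.
  exact: (@mi_bound (fun s => w s h) q (fun s => w_ge0 s h)).
under eq_bigr do rewrite HA.
rewrite -mulr_suml sum_act.
rewrite lerD2l.
rewrite mulrCA -sum_act mulr_suml.
apply: ler_sum => q _.
by rewrite ler_wpM2l ?act_ge0.
Qed.


Lemma NN_ge2 : (1 < n)%N -> 2 <= NN.
Proof. move=> n1; rewrite /NN (ler_nat R 2); exact: leq_trans n1 (fact_geq n). Qed.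

Lemma info_fano h (e : 'S_n) : (1 < n)%N ->
  w e h * ln NN - Sw h * ln 2 <= info h.
Proof.
move=> n1.
have N2 := NN_ge2 n1.
have N1 : 0 < NN - 1 by lra.
set b := fun pi : 'S_n => if pi == e then Sw h / 2 else Sw h / (2 * (NN - 1)).
have bpos pi : 0 < w pi h -> 0 < b pi.
  move=> wp; have Sp : 0 < Sw h := lt_le_trans wp (w_le_Sw pi h).
  rewrite /b; case: ifP => _; rewrite divr_gt0 // ?mulr_gt0 //; lra.
have b0 pi : 0 <= b pi.
  rewrite /b; have := Sw_ge0 h; case: ifP => _ S0; rewrite divr_ge0 // ?mulr_ge0 //; lra.
have sb : \sum_pi b pi = Sw h.
  rewrite (bigD1 e) //= {1}/b eqxx.
  rewrite (eq_bigr (fun _ => Sw h / (2 * (NN - 1)))); last first.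
    by move=> pi /negbTE pie; rewrite /b pie.
  rewrite sumr_const cardC1 card_Sn -/NN.
  have -> : (Sw h / (2 * (NN - 1))) *+ (n`!).-1 = (Sw h / (2 * (NN - 1))) * (NN - 1).
    by rewrite -mulr_natr -subn1 natrB ?fact_gt0.
  field; lra.
have G := @gibbs R _ (fun pi => w pi h) b (fun pi => w_ge0 pi h) b0 bpos.
rewrite sb lexx in G; have {}G := G isT.
have term pi : w pi h * ln (w pi h / b pi) +
    ((pi == e)%:R * (w pi h * ln NN) - w pi h * ln 2) <=
    w pi h * ln (w pi h / (Sw h / NN)).
  have [->|wp] := eqVneq (w pi h) 0; first by rewrite !(mul0r, mulr0, subr0, addr0).
  have wpos : 0 < w pi h by rewrite lt0r wp w_ge0.
  have Sp : 0 < Sw h := lt_le_trans wpos (w_le_Sw pi h).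
  have bp := bpos pi wpos.
  have -> : w pi h / (Sw h / NN) = (w pi h / b pi) * (b pi * NN / Sw h).
    field; rewrite !gt_eqF //; exact: NN_gt0.
  rewrite [in X in _ <= X]lnM ?posrE ?divr_gt0 ?mulr_gt0 ?NN_gt0 // mulrDr lerD2l.
  rewrite /b; case: (eqVneq pi e) => [->|pie] /=.
    have -> : Sw h / 2 * NN / Sw h = NN / 2 by field; rewrite gt_eqF.
    by rewrite ln_div ?posrE ?NN_gt0 // mul1r mulrBr.
  rewrite mul0r sub0r.
  have -> : Sw h / (2 * (NN - 1)) * NN / Sw h = NN / (2 * (NN - 1)).
    by field; rewrite !gt_eqF //; lra.
  have : ln (1 / 2) <= ln (NN / (2 * (NN - 1))).
    rewrite ler_ln ?posrE ?divr_gt0 ?mulr_gt0 //; try lra.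
    by rewrite ler_pdivlMr ?mulr_gt0 //; try lra; rewrite mul1r ler_pdivlMl; lra.
  rewrite [ln (1/2)]ln_div ?posrE ?ltr01 ?ltr0n // ln1 sub0r => H.
  rewrite -mulrN ler_wpM2l ?w_ge0 //.
apply: le_trans (ler_sum _ (fun pi _ => term pi)).
rewrite big_split /= sumrB.
have E1 : \sum_i (i == e)%:R * (w i h * ln NN) = w e h * ln NN.
  rewrite (bigD1 e) //= eqxx mul1r big1 ?addr0 // => i ie.
  by rewrite (negbTE ie) mul0r.
rewrite E1.
rewrite -mulr_suml -/(Sw h).
lra.
Qed.


Definition a0 (h : seq (event n)) := Defs.act S h None.
Definition J k := \sum_(h : k.-tuple (event n)) info h.
Definition StopI k := \sum_(h : k.-tuple (event n)) a0 h * info h.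
Definition AliveS k := \sum_(h : k.-tuple (event n)) (1 - a0 h) * Sw h.
Definition alive pi k := \sum_(h : k.-tuple (event n)) w pi h.

Lemma J_step k : J k.+1 <= J k - StopI k + (ln 2 - Hn) * AliveS k.
Proof.
rewrite /J (@sum_tupleS R _ k info).
apply: le_trans; first by apply: ler_sum => h _; exact: info_step.
rewrite big_split /= -mulr_sumr /StopI /AliveS /a0 -sumrB.
apply: eqle; congr (_ + _); apply: eq_bigr => h _; ring.
Qed.

Lemma info_nil : info [::] = 0.
Proof.
rewrite /info big1 // => pi _.
have -> : Sw [::] = NN by rewrite /Sw /w /= sum_const_Sn mul1r.
by rewrite /w /= divff ?gt_eqF ?NN_gt0 // divr1 ln1 mulr0.
Qed.

Lemma J0 : J 0 = 0.
Proof. by rewrite /J big1 // => h _; rewrite tuple0 info_nil. Qed.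

Lemma J_ge0 k : 0 <= J k.
Proof. by apply: sumr_ge0 => h _; exact: info_ge0. Qed.

Lemma tele K : \sum_(k < K) StopI k <= (ln 2 - Hn) * \sum_(k < K) AliveS k.
Proof.
suff : J K + \sum_(k < K) StopI k <= (ln 2 - Hn) * \sum_(k < K) AliveS k.
  by have := J_ge0 K; lra.
elim: K => [|K IH]; first by rewrite !big_ord0 J0 mulr0 addr0.
rewrite !big_ord_recr /= mulrDr.
have := J_step K; lra.
Qed.

Lemma StopI_ge k : (1 < n)%N ->
  ln NN * \sum_pi (stop_prob S p pi k - err_prob S p pi k)
    - ln 2 * \sum_pi stop_prob S p pi k <= StopI k.
Proof.
move=> n1.
have E1 : \sum_pi stop_prob S p pi k = \sum_(h : k.-tuple (event n)) a0 h * Sw h.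
  rewrite /stop_prob exchange_big /=; apply: eq_bigr => h _.
  by rewrite /Sw mulr_sumr; apply: eq_bigr => pi _; rewrite mulrC.
have E2 : \sum_pi (stop_prob S p pi k - err_prob S p pi k) =
    \sum_(h : k.-tuple (event n)) a0 h * w (est S h) h.
  rewrite /stop_prob /err_prob split_est.
  by apply: eq_bigr => h _; rewrite mulrC.
rewrite E1 E2 /StopI mulr_sumr mulr_sumr -sumrB.
apply: ler_sum => h _.
have := info_fano h (est S h) n1.
have a00 : 0 <= a0 h by apply: act_ge0.
move=> H.
have := ler_wpM2l a00 H.
rewrite mulrBr; move=> H2.
apply: le_trans H2; apply: eqle; ring.
Qed.

Lemma AliveS_eq k : AliveS k = \sum_pi alive pi k.+1.
Proof.
rewrite /alive.
under eq_bigr do rewrite (@sum_tupleS R _ k (w _)).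
rewrite exchange_big /AliveS; apply: eq_bigr => h _.
rewrite /Sw mulr_sumr; apply: eq_bigr => pi _.
under eq_bigr do rewrite w_rcons -mulrA.
by rewrite -mulr_sumr sum_act_chan mulrC.
Qed.

Lemma alive_rec pi k : alive pi k.+1 = alive pi k - stop_prob S p pi k.
Proof.
rewrite /alive (@sum_tupleS R _ k (w pi)) /stop_prob -sumrB.
apply: eq_bigr => h _.
under eq_bigr do rewrite w_rcons -mulrA.
rewrite -mulr_sumr sum_act_chan /w; ring.
Qed.

Lemma alive0 pi : alive pi 0 = 1.
Proof.
rewrite /alive (big_pred1 [tuple]) // => h /=.
apply/esym/eqP; apply: val_inj; rewrite /=; apply: size0nil; by rewrite size_tuple.
Qed.

Lemma alive_ge0 pi k : 0 <= alive pi k.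
Proof. by apply: sumr_ge0 => h _; exact: w_ge0. Qed.



Lemma stop_ge0 pi k : 0 <= stop_prob S p pi k.
Proof.
apply: sumr_ge0 => h _; rewrite mulr_ge0 //; [exact: w_ge0|exact: act_ge0].
Qed.

Lemma err_ge0 pi k : 0 <= err_prob S p pi k.
Proof.
apply: sumr_ge0 => h _; rewrite mulr_ge0 //; [exact: w_ge0|exact: act_ge0].
Qed.

Lemma alive_closed pi k : alive pi k = 1 - \sum_(j < k) stop_prob S p pi j.
Proof.
elim: k => [|k IH]; first by rewrite alive0 big_ord0 subr0.
by rewrite alive_rec IH big_ord_recr /= opprD addrA.
Qed.

Lemma alive_mono pi j L : (j <= L)%N -> alive pi L <= alive pi j.
Proof.
elim: L => [|L IH]; first by rewrite leqn0 => /eqP ->.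
rewrite leq_eqVlt => /orP [/eqP -> //|jL].
apply: le_trans (IH jL); rewrite alive_rec.
have := stop_ge0 pi L; lra.
Qed.

Lemma alive_id pi L : \sum_(k < L) alive pi k.+1 =
  \sum_(j < L) j%:R * stop_prob S p pi j + L%:R * alive pi L.
Proof.
elim: L => [|L IH]; first by rewrite !big_ord0 mul0r addr0.
rewrite !big_ord_recr /= IH alive_rec -natr1; ring.
Qed.

Lemma sum_ord_le (f : nat -> R) K L : (K <= L)%N ->
  (forall k, (K <= k < L)%N -> 0 <= f k) ->
  \sum_(k < K) f k <= \sum_(k < L) f k.
Proof.
elim: L => [|L IH]; first by rewrite leqn0 => /eqP -> _.
rewrite leq_eqVlt => /orP [/eqP -> //|KL] hf.
rewrite big_ord_recr /=.
have := IH KL (fun k hk => hf k (ltac:(lia))).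
have := hf L (ltac:(lia)).
lra.
Qed.



Lemma alive_sum_le pi E K : expected_M S p pi = E%:E -> prob_stop S p pi = 1%:E ->
  \sum_(k < K) alive pi k.+1 <= E.
Proof.
move=> hE hP.
apply/ler_addgt0Pr => d d0.
have K0 : 0 <= (K%:R : R) by rewrite ler0n.
have dK : 0 < d / (K%:R + 1) by rewrite divr_gt0 //; lra.
have [L0 HL0] := @series_approx R _ _ (fun k => stop_ge0 pi k) hP _ dK.
set L := maxn K L0.
have aL : alive pi L < d / (K%:R + 1).
  apply: (le_lt_trans (alive_mono pi _ _ (leq_maxr K L0))).
  rewrite alive_closed; lra.
have h1 : \sum_(k < K) (alive pi k.+1 - alive pi L) <=
          \sum_(k < L) (alive pi k.+1 - alive pi L).
  apply: (@sum_ord_le (fun k => alive pi k.+1 - alive pi L)) => [|k hk].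
    exact: leq_maxl.
  rewrite subr_ge0; apply: alive_mono; lia.
have h2 : \sum_(k < L) (alive pi k.+1 - alive pi L) =
          \sum_(j < L) j%:R * stop_prob S p pi j.
  rewrite sumrB alive_id sumr_const card_ord -mulr_natr mulrC; ring.
have h3 : \sum_(j < L) j%:R * stop_prob S p pi j <= E.
  have := @nneseries_lim_ge R (fun i => (i%:R * stop_prob S p pi i)%:E) xpredT 0 L.
  rewrite -/(expected_M S p pi) hE sumEFin lee_fin big_mkord; apply.
  by move=> i _ _; rewrite lee_fin mulr_ge0 ?ler0n ?stop_ge0.
have h4 : K%:R * alive pi L <= d.
  apply: le_trans (_ : K%:R * (d / (K%:R + 1)) <= d).
    by rewrite ler_wpM2l // ltW.
  rewrite mulrA ler_pdivrMr; last lra.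
  rewrite mulrDr mulr1 [d * _]mulrC; lra.
move: h1; rewrite h2 sumrB sumr_const card_ord -mulr_natr mulrC => h1.
lra.
Qed.

Lemma finite_bound K : (1 < n)%N ->
  ln NN * \sum_pi \sum_(k < K) (stop_prob S p pi k - err_prob S p pi k)
  - ln 2 * \sum_pi \sum_(k < K) stop_prob S p pi k
  <= (ln 2 - Hn) * \sum_pi \sum_(k < K) alive pi k.+1.
Proof.
move=> n1.
have T := tele K.
have E : \sum_(k < K) AliveS k = \sum_pi \sum_(k < K) alive pi k.+1.
  by rewrite exchange_big; apply: eq_bigr => k _; exact: AliveS_eq.
rewrite E in T.
apply: le_trans T.
rewrite [X in ln NN * X]exchange_big [X in ln 2 * X]exchange_big /=.
rewrite !mulr_sumr -sumrB.
by apply: ler_sum => k _; exact: StopI_ge.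
Qed.

Lemma Hn_le : Hn <= ln 2.
Proof.
have p1 : 0 <= 1 - p by have := hp1; lra.
have h1 := @cln_bound R _ hp0.
have h2 := @cln_bound R _ p1.
rewrite /Hn; lra.
Qed.


Lemma per_n_bound (E eps d : R) : (1 < n)%N -> 0 < d ->
  (forall pi, prob_stop S p pi = 1%:E /\ expected_M S p pi = E%:E) ->
  (forall pi, (P_error S p pi <= eps%:E)%E) ->
  ln NN * (1 - d - eps) - ln 2 <= (ln 2 - Hn) * E.
Proof.
move=> n1 d0 hSE herr.
have hK pi : exists K, 1 - d < \sum_(k < K) stop_prob S p pi k.
  exact: (@series_approx R _ _ (fun k => stop_ge0 pi k) (hSE pi).1 _ d0).
have [Kf HKf] := boolp.choice hK.
set K := \max_pi Kf pi.
have hstop pi : 1 - d <= \sum_(k < K) stop_prob S p pi k.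
  apply: (le_trans (ltW (HKf pi))).
  apply: sum_ord_le => [|k _]; [exact: leq_bigmax|exact: stop_ge0].
have hstop1 pi : \sum_(k < K) stop_prob S p pi k <= 1.
  have := alive_ge0 pi K; rewrite alive_closed; lra.
have herrK pi : \sum_(k < K) err_prob S p pi k <= eps.
  have := @nneseries_lim_ge R (fun i => (err_prob S p pi i)%:E) xpredT 0 K.
  rewrite -/(P_error S p pi) sumEFin big_mkord => H.
  rewrite -lee_fin; apply: le_trans (herr pi); apply: H.
  by move=> i _ _; rewrite lee_fin err_ge0.
have halive pi : \sum_(k < K) alive pi k.+1 <= E.
  exact: alive_sum_le (hSE pi).2 (hSE pi).1.
have FB := finite_bound K n1.
set A := \sum_pi \sum_(k < K) stop_prob S p pi k.
set Er := \sum_pi \sum_(k < K) err_prob S p pi k.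
set Al := \sum_pi \sum_(k < K) alive pi k.+1.
have eA : \sum_pi \sum_(k < K) (stop_prob S p pi k - err_prob S p pi k) = A - Er.
  by rewrite /A /Er -sumrB; apply: eq_bigr => pi _; rewrite sumrB.
rewrite eA -/A -/Al in FB.
have NN0 := NN_gt0.
have A1 : (1 - d) * NN <= A.
  by rewrite -sum_const_Sn; apply: ler_sum => pi _; exact: hstop.
have A2 : A <= 1 * NN.
  by rewrite -sum_const_Sn; apply: ler_sum => pi _; exact: hstop1.
have A3 : Er <= eps * NN.
  by rewrite -sum_const_Sn; apply: ler_sum => pi _; exact: herrK.
have A4 : Al <= E * NN.
  by rewrite -sum_const_Sn; apply: ler_sum => pi _; exact: halive.
have lnN : 0 <= ln NN by rewrite ln_ge0 //; have := NN_ge2 n1; lra.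
have ln2 : 0 <= ln (2 : R) by rewrite ln_ge0 // ler1n.
have C0 : 0 <= ln 2 - Hn by have := Hn_le; lra.
have s1 : ln NN * ((1 - d) * NN - eps * NN) <= ln NN * (A - Er).
  by rewrite ler_wpM2l //; lra.
have s2 : ln 2 * A <= ln 2 * (1 * NN) by rewrite ler_wpM2l.
have s3 : (ln 2 - Hn) * Al <= (ln 2 - Hn) * (E * NN) by rewrite ler_wpM2l.
rewrite -(ler_pM2r NN0).
have -> : (ln NN * (1 - d - eps) - ln 2) * NN =
   ln NN * ((1 - d) * NN - eps * NN) - ln 2 * (1 * NN) by ring.
have -> : (ln 2 - Hn) * E * NN = (ln 2 - Hn) * (E * NN) by ring.
lra.
Qed.

End Main.



Lemma binH_eq (R : realType) (p : R) : p < 1 -> binH p * ln 2 = Hn R p.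
Proof.
move=> p1.
have l2 : ln (2 : R) != 0 by rewrite gt_eqF // ln_gt0 // ltr1n.
rewrite /binH /Hn /log2.
have -> : (1 - p == 0) = false by apply/negbTE; rewrite subr_eq0 eq_sym lt_eqF.
case: (eqVneq p 0) => [->|p0] /=.
  rewrite add0r mul0r add0r subr0; field => //.
field => //.
Qed.

Lemma final_eta (R : realType) (p : R) (hp0 : 0 <= p) (hp1 : p < 1) (Rt : R)
  (codes : forall n : nat, strategy R n) :
  (forall n, sorting_code p Rt (codes n)) ->
  ((fun n => max_error (codes n) p) @ \oo --> 0%E)%classic ->
  0 < Rt ->
  forall eta : R, 0 < eta -> eta <= 1/8 -> Rt * (1 - 4 * eta) <= 1 - binH p.
Proof.
move=> hcodes hcvg Rt0 eta eta0 eta8.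
have [N0 HN0] := @ereal_cvg0_le R _ hcvg _ eta0.
have ie0 : 0 <= expR (1 / eta) by exact: expR_ge0.
set M := Num.Def.archi_bound (expR (1 / eta)).
have HM := archi_boundP ie0.
set m := maxn (maxn N0 2) M.
have m2 : (1 < m)%N by rewrite /m; lia.
have mpos : 0 < (m%:R : R) by rewrite ltr0n; lia.
have lnm : 1 / eta <= ln (m%:R : R).
  rewrite -[X in X <= _]expRK ler_ln ?posrE ?expR_gt0 //.
  apply: ltW; apply: (lt_le_trans HM); rewrite ler_nat /m; lia.
have [hv hSE] := hcodes m.
have herr pi : (P_error (codes m) p pi <= eta%:E)%E.
  apply: le_trans (HN0 m _); last by rewrite /m; lia.
  exact: (le_bigmax 0%E (fun pi => P_error (codes m) p pi) pi).
have B := @per_n_bound R m (codes m) p hv hp0 hp1 _ eta eta m2 eta0 hSE herr.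
rewrite -(binH_eq R p hp1) in B.
have ln2p : 0 < ln (2 : R) by rewrite ln_gt0 // ltr1n.
have ln21 : ln (2 : R) <= 1.
  have := @le_ln1Dx R 1 (ltac:(lra)); by rewrite (_ : 1 + 1 = 2 :> R) //.
have st := stirling R m.
rewrite /NN in B.
set a := ln ((m`!)%:R : R) in B st.
set L := ln (m%:R : R) in lnm st B.
set mm := (m%:R : R) in mpos lnm st B.
set H := binH p in B *.
have Lpos : 0 < L by apply: lt_le_trans lnm; rewrite divr_gt0.
have X0 : 0 < mm * L by rewrite mulr_gt0.
have h2 : mm <= eta * (mm * L).
  have := ler_wpM2l (ltW (mulr_gt0 eta0 mpos)) lnm.
  have -> : eta * mm * (1 / eta) = mm by field; rewrite gt_eqF.
  by rewrite -mulrA.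
have L1 : 1 <= eta * L.
  have := ler_wpM2l (ltW eta0) lnm.
  by have -> : eta * (1 / eta) = 1 by field; rewrite gt_eqF.
have m1 : 1 <= mm by rewrite /mm ler1n; exact: ltnW.
have h3 : ln 2 <= eta * (mm * L).
  apply: (le_trans ln21); apply: (le_trans L1).
  rewrite mulrCA ler_peMl //; last by rewrite mulr_ge0 // ltW.
have E1 : (ln 2 - binH p * ln 2) * (mm * (L / ln 2) / Rt) = (1 - H) * (mm * L) / Rt.
  by rewrite /H; field; rewrite !gt_eqF.
rewrite E1 in B.
have B2 : Rt * (a * (1 - eta - eta) - ln 2) <= (1 - H) * (mm * L).
  have := ler_wpM2l (ltW Rt0) B.
  by have -> : Rt * ((1 - H) * (mm * L) / Rt) = (1 - H) * (mm * L) by field; rewrite gt_eqF.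
have e12 : 0 <= 1 - eta - eta by lra.
have h4 : (mm * L - mm) * (1 - eta - eta) <= a * (1 - eta - eta).
  by rewrite ler_wpM2r //; lra.
have h5 : (1 - 4 * eta) * (mm * L) <= a * (1 - eta - eta) - ln 2.
  set X := mm * L in h2 h3 h4 *.
  have : (1 - 4 * eta) * X <= (X - eta * X) * (1 - eta - eta) - eta * X.
    have -> : (X - eta * X) * (1 - eta - eta) - eta * X = (1 - 4 * eta) * X + 2 * (eta * eta * X) by ring.
    rewrite lerDl; apply: mulr_ge0 => //; rewrite !mulr_ge0 // ltW //.
  have : (X - eta * X) * (1 - eta - eta) <= (X - mm) * (1 - eta - eta).
    by rewrite ler_wpM2r //; lra.
  lra.
have B3 : Rt * ((1 - 4 * eta) * (mm * L)) <= (1 - H) * (mm * L).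
  apply: le_trans B2; rewrite ler_wpM2l //; exact: ltW.
rewrite mulrA in B3.
by rewrite -(ler_pM2r X0).
Qed.

Theorem theorem3 (R : realType) (p : R) (hp0 : 0 <= p) (hp1 : p < 1 / 2) :
  forall Rt : R, achievable p Rt -> Rt <= 1 - binH p.
Proof.
move=> Rt [codes [hcodes hcvg]].
have p1 : p < 1 by move: hp1; lra.
have ln2p : 0 < ln (2 : R) by rewrite ln_gt0 // ltr1n.
have Hb : binH p <= 1.
  have := Hn_le R p hp0 p1; rewrite -(binH_eq R p p1) => H.
  by rewrite -(ler_pM2r ln2p) mul1r.
case: (lerP Rt 0) => [Rt0|Rt0]; first lra.
apply/ler_addgt0Pr => e e0.
have D0 : 0 < 4 * Rt + 8 * e by lra.
set eta := e / (4 * Rt + 8 * e).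
have eta0 : 0 < eta by rewrite divr_gt0.
have eta8 : eta <= 1 / 8.
  rewrite /eta ler_pdivrMr // mulrDr; lra.
have F := @final_eta R p hp0 p1 Rt codes hcodes hcvg Rt0 eta eta0 eta8.
have G : Rt * (4 * eta) <= e.
  have -> : Rt * (4 * eta) = (4 * Rt * e) / (4 * Rt + 8 * e) by rewrite /eta; field; rewrite gt_eqF.
  rewrite ler_pdivrMr // mulrDr.
  have := mulr_gt0 e0 e0; rewrite [e * (4 * Rt)]mulrC; lra.
move: F; rewrite mulrBr mulr1; lra.
Qed.
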